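(* Let $A, B, C \subseteq\omega$ with $B$ and $C$ infinite. If $A$ is c.e. relative to every infinite subset of $B$, and $B$ is c.e. relative to every infinite subset of $C$, then $A$ is c.e. relative to every infinite subset of $C$. *)

(* Defs.v *)
From Stdlib Require Import List Arith.
Import ListNotations.

(* Arities are not tracked: functions act on argument lists, missing
   arguments default to 0 (this only pads/projects, so the class of
   functions defined is exactly the X-partial recursive functions). *)
Inductive prf : Type :=
| PZero : prf
| PSucc : prf
| PProj : nat -> prf
| POracle : prf
| PComp : prf -> list prf -> prf
| PRec : prf -> prf -> prf
| PMu : prf -> prf.

Definition hd0 (l : list nat) : nat := hd 0 l.

Inductive peval (X : nat -> Prop) : prf -> list nat -> nat -> Prop :=
| ev_zero : forall a, peval X PZero a 0
| ev_succ : forall a, peval X PSucc a (S (hd0 a))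
| ev_proj : forall i a, peval X (PProj i) a (nth i a 0)
| ev_orac_in : forall a, X (hd0 a) -> peval X POracle a 1
| ev_orac_out : forall a, ~ X (hd0 a) -> peval X POracle a 0
| ev_comp : forall f gs a bs y,
    pevall X gs a bs -> peval X f bs y -> peval X (PComp f gs) a y
| ev_rec0 : forall f g a y,
    hd0 a = 0 -> peval X f (tl a) y -> peval X (PRec f g) a y
| ev_recS : forall f g a n r y,
    hd0 a = S n -> peval X (PRec f g) (n :: tl a) r ->
    peval X g (n :: r :: tl a) y -> peval X (PRec f g) a y
| ev_mu : forall f a y,
    peval X f (y :: a) 0 ->
    (forall z, z < y -> exists v, v <> 0 /\ peval X f (z :: a) v) ->
    peval X (PMu f) a y
with pevall (X : nat -> Prop) : list prf -> list nat -> list nat -> Prop :=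
| evl_nil : forall a, pevall X [] a []
| evl_cons : forall g gs a b bs,
    peval X g a b -> pevall X gs a bs -> pevall X (g :: gs) a (b :: bs).

Definition ce_in (X A : nat -> Prop) : Prop :=
  exists e : prf, forall n, A n <-> exists y, peval X e [n] y.

Definition infinite_set (B : nat -> Prop) : Prop :=
  forall m, exists n, m <= n /\ B n.

Definition subset_of (Y B : nat -> Prop) : Prop := forall n, Y n -> B n.

(* Main.v *)
Require Import Defs.
From Stdlib Require Import List Arith Bool Lia ClassicalEpsilon FunctionalExtensionality Classical.
Import ListNotations.

Lemma least_ex (p : nat -> bool) n : p n = true -> exists m, p m = true /\ forall k, k < m -> p k = false.
Proof.
  induction n as [n IH] using lt_wf_ind. intro Hn.
  destruct (classic (exists k, k < n /\ p k = true)) as [[k [Hk Hpk]]|Hno].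
  - exact (IH k Hk Hpk).
  - exists n. split; auto. intros k Hk. destruct (p k) eqn:E; auto. exfalso; apply Hno; eauto.
Qed.

Open Scope bool_scope.
Definition lmu (p : nat -> bool) : nat :=
  epsilon (inhabits 0) (fun n => p n = true /\ forall k, k < n -> p k = false).

Lemma lmu_spec p n : p n = true -> p (lmu p) = true /\ forall k, k < lmu p -> p k = false.
Proof. intro H. unfold lmu. apply epsilon_spec. eapply least_ex; eauto. Qed.

Lemma lmu_le p n : p n = true -> lmu p <= n.
Proof. intro H. destruct (lmu_spec p n H) as [H1 H2].
  destruct (le_lt_dec (lmu p) n); auto. rewrite H2 in H; auto; discriminate. Qed.

Lemma lmu_eq p y : p y = true -> (forall z, z < y -> p z = false) -> lmu p = y.
Proof. intros H H'. destruct (lmu_spec p y H) as [H1 H2].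
  destruct (lt_eq_lt_dec (lmu p) y) as [[Hl|Hl]|Hl]; auto.
  - rewrite H' in H1; auto; discriminate.
  - rewrite H2 in H; auto; discriminate. Qed.

Definition chi (X : nat -> Prop) (x : nat) : nat := if excluded_middle_informative (X x) then 1 else 0.

Lemma hd0_nth a : hd0 a = nth 0 a 0.
Proof. destruct a; reflexivity. Qed.

Definition tot X t (F : list nat -> nat) := forall a y, peval X t a y <-> y = F a.

Lemma tot_ext X t F G : tot X t F -> (forall a, F a = G a) -> tot X t G.
Proof. unfold tot; intros H E a y. rewrite H, E. tauto. Qed.

Lemma tot_zero X : tot X PZero (fun _ => 0).
Proof. intros a y; split; intro H. inversion H; auto. subst; constructor. Qed.
Lemma tot_succ X : tot X PSucc (fun a => S (nth 0 a 0)).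
Proof. intros a y; rewrite <- hd0_nth; split; intro H. inversion H; auto. subst; constructor. Qed.
Lemma tot_proj X i : tot X (PProj i) (fun a => nth i a 0).
Proof. intros a y; split; intro H. inversion H; auto. subst; constructor. Qed.
Lemma tot_orac X : tot X POracle (fun a => chi X (nth 0 a 0)).
Proof. intros a y; rewrite <- hd0_nth; unfold chi; split; intro H.
  - inversion H; subst; destruct (excluded_middle_informative (X (hd0 a))); tauto.
  - subst; destruct (excluded_middle_informative (X (hd0 a))); constructor; auto. Qed.

Lemma totl X gs Gs : Forall2 (tot X) gs Gs -> forall a bs, pevall X gs a bs <-> bs = map (fun G => G a) Gs.
Proof. induction 1; intros a bs; split; intro H1.
  - inversion H1; auto.
  - subst; constructor.
  - inversion H1; subst. match goal with H2 : peval _ _ _ _ |- _ => apply H in H2 end. match goal with H2 : pevall _ _ _ _ |- _ => apply IHForall2 in H2 end. subst; auto.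
  - subst; simpl. constructor. apply H; auto. apply IHForall2; auto. Qed.

Lemma tot_comp X f F gs Gs : tot X f F -> Forall2 (tot X) gs Gs ->
  tot X (PComp f gs) (fun a => F (map (fun G => G a) Gs)).
Proof. intros Hf Hg a y; split; intro H.
  - inversion H; subst. match goal with H2 : pevall _ _ _ _ |- _ => apply (totl X gs Gs Hg) in H2 end. subst. apply Hf; auto.
  - subst. econstructor. apply (totl X gs Gs Hg); reflexivity. apply Hf; auto. Qed.

Lemma tot_rec X f F g G : tot X f F -> tot X g G ->
  tot X (PRec f g) (fun a => nat_rec (fun _ => nat) (F (tl a)) (fun m r => G (m :: r :: tl a)) (hd0 a)).
Proof. intros Hf Hg a. remember (hd0 a) as n. revert a Heqn.
  induction n as [|n IHn]; intros a Hn y; split; intro H; simpl.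
  - inversion H; subst. apply Hf; auto. congruence.
  - subst. apply ev_rec0; auto. apply Hf; auto.
  - inversion H as [| | | | | |f0 g0 a0 y0 E0|f0 g0 a0 n0 r y0 E0 H3 H4|]; subst. congruence. rewrite <- Hn in E0. injection E0 as <-.
    apply (IHn (n :: tl a) eq_refl) in H3. subst. apply Hg in H4. auto.
  - subst. eapply ev_recS. symmetry; eauto. apply (IHn (n :: tl a) eq_refl). reflexivity.
    apply Hg. reflexivity. Qed.

Lemma tot_mu X f F : tot X f F -> (forall a, exists y, F (y :: a) = 0) ->
  tot X (PMu f) (fun a => lmu (fun y => F (y :: a) =? 0)).
Proof. intros Hf Hex a y. destruct (Hex a) as [y0 Hy0].
  assert (Hp : (fun y => F (y :: a) =? 0) y0 = true) by (simpl; rewrite Hy0; auto).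
  split; intro H.
  - inversion H as [| | | | | | | |f0 a0 y1 H1 H3]; subst. symmetry; apply lmu_eq.
    + apply Hf in H1. rewrite <- H1. auto.
    + intros z Hz. destruct (H3 z Hz) as [v [Hv Hpv]]. apply Hf in Hpv. subst.
      apply Nat.eqb_neq; auto.
  - subst. destruct (lmu_spec _ _ Hp) as [H1 H2]. constructor.
    + apply Hf. symmetry. apply Nat.eqb_eq; auto.
    + intros z Hz. exists (F (z :: a)). split. apply Nat.eqb_neq. apply H2; auto. apply Hf; auto. Qed.

Ltac fa := repeat (apply Forall2_cons || apply Forall2_nil).
Ltac tbase := first [apply tot_zero | apply tot_succ | apply tot_proj | apply tot_orac | eassumption].
Ltac tcomp := eapply tot_ext; [eapply tot_comp; [ | fa ] | ].

Definition one := PComp PSucc [PZero].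
Lemma tot_one X : tot X one (fun _ => 1).
Proof. tcomp. apply tot_succ. apply tot_zero. intros; reflexivity. Qed.

Definition tpred := PRec PZero (PProj 0).
Lemma tot_pred X : tot X tpred (fun a => pred (nth 0 a 0)).
Proof. eapply tot_ext. apply tot_rec. apply tot_zero. apply tot_proj.
  intro a; destruct a as [|x a]; simpl; [reflexivity|destruct x; reflexivity]. Qed.

Definition tsubr := PRec (PProj 0) (PComp tpred [PProj 1]).
Lemma tot_subr X : tot X tsubr (fun a => nth 1 a 0 - nth 0 a 0).
Proof. eapply tot_ext. apply tot_rec. apply tot_proj. tcomp. apply tot_pred. apply tot_proj.
  intros; reflexivity.
  intro a; destruct a as [|x a]; simpl. reflexivity. induction x; simpl. destruct a; simpl; lia.
  rewrite IHx. lia. Qed.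

Definition tsub := PComp tsubr [PProj 1; PProj 0].
Lemma tot_sub X : tot X tsub (fun a => nth 0 a 0 - nth 1 a 0).
Proof. tcomp. apply tot_subr. apply tot_proj. apply tot_proj. intros; reflexivity. Qed.

Definition tifz := PRec (PProj 0) (PProj 3).
Lemma tot_ifz X : tot X tifz (fun a => if nth 0 a 0 =? 0 then nth 1 a 0 else nth 2 a 0).
Proof. eapply tot_ext. apply tot_rec. apply tot_proj. apply tot_proj.
  intro a; destruct a as [|x a]; simpl. reflexivity. destruct x; simpl; destruct a; reflexivity. Qed.

Definition tsg := PComp tifz [PProj 0; PZero; one].
Lemma tot_sg X : tot X tsg (fun a => if nth 0 a 0 =? 0 then 0 else 1).
Proof. tcomp. apply tot_ifz. apply tot_proj. apply tot_zero. apply tot_one. intros; reflexivity. Qed.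

Definition tcond := PComp tifz [PProj 0; PZero; PProj 1].
Lemma tot_cond X : tot X tcond (fun a => if nth 0 a 0 =? 0 then 0 else nth 1 a 0).
Proof. tcomp. apply tot_ifz. apply tot_proj. apply tot_zero. apply tot_proj. intros; reflexivity. Qed.

Definition tle0 := PComp tsg [tsub].
Lemma tot_le0 X : tot X tle0 (fun a => if nth 0 a 0 <=? nth 1 a 0 then 0 else 1).
Proof. tcomp. apply tot_sg. apply tot_sub. intro a; simpl.
  destruct (Nat.leb_spec (nth 0 a 0) (nth 1 a 0)); destruct (Nat.eqb_spec (nth 0 a 0 - nth 1 a 0) 0); lia. Qed.

Definition teq0 := PComp tifz [tle0; PComp tle0 [PProj 1; PProj 0]; one].
Lemma tot_eq0 X : tot X teq0 (fun a => if nth 0 a 0 =? nth 1 a 0 then 0 else 1).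
Proof. tcomp. apply tot_ifz. apply tot_le0. tcomp. apply tot_le0. apply tot_proj. apply tot_proj.
  intros; reflexivity. apply tot_one. intro a; simpl.
  destruct (Nat.leb_spec (nth 0 a 0) (nth 1 a 0)); destruct (Nat.leb_spec (nth 1 a 0) (nth 0 a 0));
  destruct (Nat.eqb_spec (nth 0 a 0) (nth 1 a 0)); simpl; lia. Qed.

Definition tH := PComp tifz [PComp teq0 [PProj 0; PProj 1]; PZero; PComp tle0 [PProj 2; one]].
Lemma tot_H X : tot X tH (fun a => if nth 0 a 0 =? nth 1 a 0 then 0 else if nth 2 a 0 <=? 1 then 0 else 1).
Proof. tcomp. apply tot_ifz. tcomp. apply tot_eq0. apply tot_proj. apply tot_proj. intros; reflexivity.
  apply tot_zero. tcomp. apply tot_le0. apply tot_proj. apply tot_one. intros; reflexivity.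
  intro a; simpl. destruct (nth 0 a 0 =? nth 1 a 0); reflexivity. Qed.

Definition tfin := PComp tifz [PComp tle0 [PProj 1; PProj 0]; PZero;
   PComp tifz [PComp teq0 [PProj 2; one]; PComp PSucc [PProj 0]; PZero]].
Lemma tot_fin X : tot X tfin (fun a => if nth 0 a 0 <? nth 1 a 0 then (if nth 2 a 0 =? 1 then S (nth 0 a 0) else 0) else 0).
Proof. tcomp. apply tot_ifz. tcomp. apply tot_le0. apply tot_proj. apply tot_proj. intros; reflexivity.
  apply tot_zero. tcomp. apply tot_ifz. tcomp. apply tot_eq0. apply tot_proj. apply tot_one. intros; reflexivity.
  tcomp. apply tot_succ. apply tot_proj. intros; reflexivity. apply tot_zero. intros; reflexivity.
  intro a; simpl. destruct (Nat.leb_spec (nth 1 a 0) (nth 0 a 0)); destruct (Nat.ltb_spec (nth 0 a 0) (nth 1 a 0)); try lia; simpl; auto.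
  destruct (nth 2 a 0 =? 1); auto. Qed.

Fixpoint prf_ind' (P : prf -> Prop)
  (hz : P PZero) (hs : P PSucc) (hp : forall i, P (PProj i)) (ho : P POracle)
  (hc : forall f gs, P f -> Forall P gs -> P (PComp f gs))
  (hr : forall f g, P f -> P g -> P (PRec f g))
  (hm : forall f, P f -> P (PMu f)) (e : prf) {struct e} : P e :=
  match e with
  | PZero => hz | PSucc => hs | PProj i => hp i | POracle => ho
  | PComp f gs => hc f gs (prf_ind' P hz hs hp ho hc hr hm f)
      ((fix go (l : list prf) : Forall P l := match l with
        | [] => Forall_nil _
        | g :: l' => Forall_cons _ (prf_ind' P hz hs hp ho hc hr hm g) (go l') end) gs)
  | PRec f g => hr f g (prf_ind' P hz hs hp ho hc hr hm f) (prf_ind' P hz hs hp ho hc hr hm g)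
  | PMu f => hm f (prf_ind' P hz hs hp ho hc hr hm f)
  end.

Fixpoint ev (X : nat -> Prop) (s : nat) (e : prf) (a : list nat) {struct e} : nat :=
  match e with
  | PZero => 1
  | PSucc => S (S (hd0 a))
  | PProj i => S (nth i a 0)
  | POracle => S (chi X (hd0 a))
  | PComp f gs => if forallb (fun g => negb (ev X s g a =? 0)) gs
                  then ev X s f (map (fun g => pred (ev X s g a)) gs) else 0
  | PRec f g => nat_rec (fun _ => nat) (ev X s f (tl a))
      (fun m r => match r with 0 => 0 | S r' => ev X s g (m :: r' :: tl a) end) (hd0 a)
  | PMu f => if lmu (fun y => (y =? s) || (ev X s f (y :: a) <=? 1)) <? s
             then (if ev X s f (lmu (fun y => (y =? s) || (ev X s f (y :: a) <=? 1)) :: a) =? 1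
                   then S (lmu (fun y => (y =? s) || (ev X s f (y :: a) <=? 1))) else 0)
             else 0
  end.

Fixpoint depth (e : prf) : nat :=
  match e with
  | PZero => 0 | PSucc => 1 | PProj i => S i | POracle => 1
  | PComp f gs => fold_right (fun g m => Nat.max (depth g) m) 0 gs
  | PRec f g => Nat.max (S (depth f)) (pred (depth g))
  | PMu f => pred (depth f)
  end.

Fixpoint ck (k : nat) (e : prf) {struct e} : prf :=
  match e with
  | PZero => PComp PSucc [PZero]
  | PSucc => PComp PSucc [PComp PSucc [PProj 0]]
  | PProj i => PComp PSucc [PProj i]
  | POracle => PComp PSucc [POracle]
  | PComp f gs =>
     fold_right (fun g acc => PComp tcond [ck k g; acc])
       (PComp (ck (Nat.max (length gs) (depth f)) f)
          (map (fun g => PComp tpred [ck k g]) gs ++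
           repeat PZero (Nat.max (length gs) (depth f) - length gs) ++ [PProj k])) gs
  | PRec f g => PRec (ck (pred k) f)
       (PComp tcond [PProj 1; PComp (ck (S k) g) (PProj 0 :: PComp tpred [PProj 1] :: map PProj (seq 2 k))])
  | PMu f => PComp tfin [PMu (PComp tH [PProj 0; PProj (S k); ck (S k) f]); PProj k;
       PComp (ck (S k) f) (PMu (PComp tH [PProj 0; PProj (S k); ck (S k) f]) :: map PProj (seq 0 (S k)))]
  end.

Definition agree k (a b : list nat) := forall i, i < k -> nth i a 0 = nth i b 0.

Lemma depth_comp_le gs k : fold_right (fun g m => Nat.max (depth g) m) 0 gs <= k -> Forall (fun g => depth g <= k) gs.
Proof. induction gs; simpl; intros; constructor; [lia | apply IHgs; lia]. Qed.

Lemma forallb_ext_in {A} (f g : A -> bool) l : (forall x, In x l -> f x = g x) -> forallb f l = forallb g l.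
Proof. induction l; simpl; intros H; auto. rewrite H, IHl; auto. Qed.

Lemma nth_tl (l : list nat) j : nth j (tl l) 0 = nth (S j) l 0.
Proof. destruct l; [destruct j|]; reflexivity. Qed.

Lemma ev_agree X : forall e k a b s, depth e <= k -> agree k a b -> ev X s e a = ev X s e b.
Proof.
  induction e using prf_ind'; intros k a b s Hd Ha; cbn [ev depth] in *.
  - reflexivity.
  - rewrite !hd0_nth, (Ha 0); [reflexivity|lia].
  - rewrite (Ha i); auto.
  - rewrite !hd0_nth, (Ha 0); [reflexivity|lia].
  - apply depth_comp_le in Hd.
    assert (E : forall g, In g gs -> ev X s g a = ev X s g b).
    { intros g Hg. rewrite Forall_forall in H, Hd. apply (H g Hg k); auto. }
    rewrite (map_ext_in _ _ gs (fun g Hg => f_equal pred (E g Hg))).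
    rewrite (forallb_ext_in _ _ gs (fun g Hg => f_equal (fun v => negb (v =? 0)) (E g Hg))). reflexivity.
  - apply Nat.max_lub_iff in Hd as [Hd1 Hd2]. assert (Hk : 1 <= k) by lia.
    assert (Ht : agree (pred k) (tl a) (tl b)).
    { intros i Hi. rewrite !nth_tl. apply Ha. lia. }
    rewrite !hd0_nth, (Ha 0) by lia. induction (nth 0 b 0); simpl.
    + apply (IHe1 (pred k)); [lia | exact Ht].
    + rewrite IHn. destruct (nat_rec (fun _ => nat) (ev X s e1 (tl b)) _ n) as [|r]; [reflexivity|]. apply (IHe2 (S k)). lia.
      intros [|[|i]] Hi; simpl; auto. apply Ht; lia.
  - assert (E : forall y, ev X s e (y :: a) = ev X s e (y :: b)).
    { intro y. eapply (IHe (S k)). lia. intros [|i] Hi; simpl; auto. apply Ha; lia. }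
    assert (E2 : (fun y => (y =? s) || (ev X s e (y :: a) <=? 1)) = (fun y => (y =? s) || (ev X s e (y :: b) <=? 1))).
    { apply functional_extensionality; intro y; rewrite E; auto. }
    rewrite E2, E. reflexivity.
Qed.

Lemma nth_map_seq (l : list nat) m n i : i < n -> nth i (map (fun j => nth j l 0) (seq m n)) 0 = nth (m + i) l 0.
Proof. revert m i; induction n; intros m i Hi. lia. destruct i; simpl. f_equal; lia.
  rewrite IHn by lia. f_equal; lia. Qed.

Lemma pad_lemma (M : list nat) kf n s : n = length M -> n <= kf ->
  nth kf (M ++ repeat 0 (kf - n) ++ [s]) 0 = s /\ agree kf (M ++ repeat 0 (kf - n) ++ [s]) M.
Proof. intros -> H. split.
  - rewrite app_nth2 by lia. rewrite app_nth2; rewrite repeat_length; [|lia].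
    replace (kf - length M - (kf - length M)) with 0 by lia. reflexivity.
  - intros i Hi. destruct (le_lt_dec (length M) i).
    + rewrite app_nth2 by lia. rewrite app_nth1 by (rewrite repeat_length; lia).
      rewrite nth_repeat. symmetry; apply nth_overflow; auto.
    + rewrite app_nth1; auto. Qed.

Lemma guard_ok X k gs t T :
  Forall (fun g => tot X (ck k g) (fun l => ev X (nth k l 0) g l)) gs -> tot X t T ->
  tot X (fold_right (fun g acc => PComp tcond [ck k g; acc]) t gs)
    (fun l => if forallb (fun g => negb (ev X (nth k l 0) g l =? 0)) gs then T l else 0).
Proof. intros HF HT. induction HF; simpl.
  - eapply tot_ext; eauto.
  - tcomp. apply tot_cond. exact H. exact IHHF. intro a; simpl.
    destruct (ev X (nth k a 0) x a =? 0); simpl; auto. Qed.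

Lemma F2_map X k gs : Forall (fun g => tot X (ck k g) (fun l => ev X (nth k l 0) g l)) gs ->
  Forall2 (tot X) (map (fun g => PComp tpred [ck k g]) gs) (map (fun g l => pred (ev X (nth k l 0) g l)) gs).
Proof. induction 1; simpl; constructor; auto. tcomp. apply tot_pred. exact H. intros; reflexivity. Qed.

Lemma F2_rep X n : Forall2 (tot X) (repeat PZero n) (repeat (fun _ => 0) n).
Proof. induction n; simpl; constructor; auto. apply tot_zero. Qed.

Lemma F2_projs X m n : Forall2 (tot X) (map PProj (seq m n)) (map (fun i l => nth i l 0) (seq m n)).
Proof. revert m; induction n; intro m; simpl; constructor; auto. apply tot_proj. Qed.

Lemma ck_ok X : forall e k, depth e <= k -> tot X (ck k e) (fun l => ev X (nth k l 0) e l).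
Proof.
  induction e using prf_ind'; intros k Hd; cbn [ck depth] in *.
  - tcomp. apply tot_succ. apply tot_zero. intros; reflexivity.
  - tcomp. apply tot_succ. tcomp. apply tot_succ. apply tot_proj. intros; reflexivity.
    intro a; simpl; rewrite hd0_nth; reflexivity.
  - tcomp. apply tot_succ. apply tot_proj. intros; reflexivity.
  - tcomp. apply tot_succ. apply tot_orac. intro a; simpl; rewrite hd0_nth; reflexivity.
  - apply depth_comp_le in Hd.
    assert (HF : Forall (fun g => tot X (ck k g) (fun l => ev X (nth k l 0) g l)) gs).
    { rewrite Forall_forall in *. intros g Hg. apply H; auto. }
    set (kf := Nat.max (length gs) (depth e)).
    eapply tot_ext. apply guard_ok. exact HF.
    eapply tot_comp. apply (IHe kf). unfold kf; lia.
    apply Forall2_app. apply F2_map; exact HF. apply Forall2_app. apply F2_rep. constructor. apply tot_proj. constructor.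
    intro l. cbn [ev]. destruct forallb; [|reflexivity].
    rewrite !map_app, map_map, map_repeat. simpl.
    destruct (pad_lemma (map (fun x => pred (ev X (nth k l 0) x l)) gs) kf (length gs) (nth k l 0))
      as [E1 E2]. rewrite length_map; auto. unfold kf; lia.
    rewrite E1. apply (ev_agree X e kf). unfold kf; lia. exact E2.
  - apply Nat.max_lub_iff in Hd as [Hd1 Hd2].
    eapply tot_ext. apply tot_rec. apply (IHe1 (pred k)). lia.
    tcomp. apply tot_cond. apply tot_proj. eapply tot_comp. apply (IHe2 (S k)). lia.
    apply Forall2_cons. apply tot_proj. apply Forall2_cons. tcomp. apply tot_pred. apply tot_proj.
    intros; reflexivity. apply F2_projs. intros; reflexivity.
    intro l. cbn [ev]. rewrite nth_tl. replace (S (pred k)) with k by lia.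
    assert (EG : forall m r, (if r =? 0 then 0 else
       ev X (nth (S k) (m :: pred r :: map (fun G => G (m :: r :: tl l)) (map (fun i l0 => nth i l0 0) (seq 2 k))) 0) e2
            (m :: pred r :: map (fun G => G (m :: r :: tl l)) (map (fun i l0 => nth i l0 0) (seq 2 k))))
       = match r with 0 => 0 | S r' => ev X (nth k l 0) e2 (m :: r' :: tl l) end).
    { intros m [|r]; [reflexivity|]. simpl pred. cbn [Nat.eqb]. rewrite map_map.
      assert (EN : nth (S k) (m :: r :: map (fun x => nth x (m :: S r :: tl l) 0) (seq 2 k)) 0 = nth k l 0).
      { destruct k as [|k']. lia.
        transitivity (nth k' (map (fun x => nth x (m :: S r :: tl l) 0) (seq 2 (S k'))) 0). reflexivity.
        rewrite nth_map_seq by lia. simpl. rewrite nth_tl. reflexivity. }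
      rewrite EN. apply (ev_agree X e2 (S k)). lia.
      intros [|[|i]] Hi; try reflexivity.
      transitivity (nth i (map (fun x => nth x (m :: S r :: tl l) 0) (seq 2 k)) 0). reflexivity.
      rewrite nth_map_seq by lia. reflexivity. }
    simpl. induction (hd0 l) as [|n IHn]; simpl. reflexivity.
    rewrite IHn. apply EG.
  - assert (HK : tot X (PMu (PComp tH [PProj 0; PProj (S k); ck (S k) e]))
       (fun l => lmu (fun y => (y =? nth k l 0) || (ev X (nth k l 0) e (y :: l) <=? 1)))).
    { eapply tot_ext. apply tot_mu. tcomp. apply tot_H. apply tot_proj. apply tot_proj. apply IHe. lia.
      intros; reflexivity.
      - intro l. exists (nth k l 0). simpl. rewrite Nat.eqb_refl. reflexivity.
      - intro l. cbv beta. f_equal. apply functional_extensionality; intro y. simpl.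
        destruct (y =? nth k l 0); simpl; auto. destruct (ev X (nth k l 0) e (y :: l) <=? 1); reflexivity. }
    tcomp. apply tot_fin. exact HK. apply tot_proj. eapply tot_comp. apply IHe. lia.
    apply Forall2_cons. exact HK. apply F2_projs.
    intro l. cbn [ev]. cbn [map nth]. rewrite map_map. cbv beta.
    set (K := lmu _).
    rewrite nth_map_seq by lia. simpl (0 + k).
    rewrite (ev_agree X e (S k) (K :: map (fun x => nth x l 0) (seq 0 (S k))) (K :: l)). reflexivity.
    lia. intros [|i] Hi; [reflexivity|]. change (nth i (map (fun x => nth x l 0) (seq 0 (S k))) 0 = nth i l 0). rewrite nth_map_seq by lia. reflexivity.
Qed.

Lemma ev_sound X : forall e s a y, ev X s e a = S y -> peval X e a y.
Proof.
  induction e using prf_ind'; intros s a y Hy; cbn [ev] in Hy.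
  - injection Hy as <-. constructor.
  - injection Hy as <-. constructor.
  - injection Hy as <-. constructor.
  - injection Hy as <-. unfold chi. destruct (excluded_middle_informative (X (hd0 a))); constructor; auto.
  - destruct (forallb (fun g => negb (ev X s g a =? 0)) gs) eqn:Eb; [|discriminate].
    econstructor; [|apply (IHe s); exact Hy].
    clear Hy IHe. induction H; simpl in *; constructor.
    + apply andb_true_iff in Eb as [E1 _]. apply (H s).
      destruct (ev X s x a); [discriminate|reflexivity].
    + apply andb_true_iff in Eb as [_ E2]. auto.
  - assert (G : forall n y a', hd0 a' = n -> tl a' = tl a ->
      nat_rec (fun _ => nat) (ev X s e1 (tl a))
        (fun m r => match r with 0 => 0 | S r' => ev X s e2 (m :: r' :: tl a) end) n = S y ->
      peval X (PRec e1 e2) a' y).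
    { induction n as [|n IHn]; intros y' a' H1 H2 H3; simpl in H3.
      - apply ev_rec0; auto. rewrite H2. eapply IHe1; eauto.
      - destruct (nat_rec _ _ _ n) as [|r] eqn:Er; [discriminate|].
        eapply ev_recS. exact H1. rewrite H2. apply (IHn r (n :: tl a)); auto.
        rewrite H2. eapply IHe2; eauto. }
    eapply G; eauto.
  - set (p := fun y => (y =? s) || (ev X s e (y :: a) <=? 1)) in Hy.
    destruct (lmu_spec p s) as [P1 P2]. unfold p; rewrite Nat.eqb_refl; reflexivity.
    destruct (lmu p <? s) eqn:Es; [|discriminate].
    destruct (ev X s e (lmu p :: a) =? 1) eqn:E1; [|discriminate]. injection Hy as <-.
    constructor.
    + apply (IHe s). apply Nat.eqb_eq in E1; auto.
    + intros z Hz. specialize (P2 z Hz). unfold p in P2. apply orb_false_iff in P2 as [_ P2].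
      apply Nat.leb_gt in P2. destruct (ev X s e (z :: a)) as [|v] eqn:Ez; [lia|].
      exists v. split. lia. apply (IHe s); auto.
Qed.

Lemma unif (P : nat -> nat -> Prop) y : (forall z, z < y -> exists s0, forall s, s0 <= s -> P z s) ->
  exists s0, forall s, s0 <= s -> forall z, z < y -> P z s.
Proof. induction y; intro H. exists 0; intros; lia.
  destruct IHy as [s1 H1]. intros; apply H; lia. destruct (H y) as [s2 H2]. lia.
  exists (Nat.max s1 s2). intros s Hs z Hz. destruct (Nat.eq_dec z y). subst; apply H2; lia. apply H1; lia. Qed.

Lemma ev_compl X : forall e a y, peval X e a y -> exists s0, forall s, s0 <= s -> ev X s e a = S y.
Proof.
  induction e using prf_ind'; intros a y Hy.
  - inversion Hy; subst; exists 0; reflexivity.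
  - inversion Hy; subst; exists 0; reflexivity.
  - inversion Hy; subst; exists 0; reflexivity.
  - exists 0; intros; cbn [ev]. unfold chi.
    inversion Hy; subst; destruct (excluded_middle_informative (X (hd0 a))); tauto.
  - inversion Hy as [| | | | |f0 gs0 a0 bs y0 Hl Hf| | |]; subst.
    assert (L : forall bs, pevall X gs a bs -> exists s0, forall s, s0 <= s -> map (fun g => ev X s g a) gs = map S bs).
    { clear Hy Hl Hf bs. induction H; intros bs Hl; inversion Hl as [|g0 gs0 a0 b1 bs1 Hb1 Hbs1]; subst.
      - exists 0; reflexivity.
      - destruct (H _ _ Hb1) as [s1 E1]. destruct (IHForall _ Hbs1) as [s2 E2].
        exists (Nat.max s1 s2); intros s Hs; simpl. rewrite E1, E2 by lia. reflexivity. }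
    destruct (L _ Hl) as [s1 E1]. destruct (IHe _ _ Hf) as [s2 E2].
    exists (Nat.max s1 s2). intros s Hs. cbn [ev].
    assert (Eb : forallb (fun g => negb (ev X s g a =? 0)) gs = true).
    { specialize (E1 s ltac:(lia)). clear -E1. revert bs E1. induction gs; intros bs E1; simpl; auto.
      destruct bs; simpl in E1; inversion E1. rewrite H0; simpl. eapply IHgs; eauto. }
    rewrite Eb. replace (map (fun g => pred (ev X s g a)) gs) with bs. apply E2; lia.
    rewrite <- (map_map (fun g => ev X s g a) pred), E1 by lia. rewrite map_map. simpl. symmetry; apply map_id.
  - assert (G : forall n a y, hd0 a = n -> peval X (PRec e1 e2) a y -> exists s0, forall s, s0 <= s ->
        nat_rec (fun _ => nat) (ev X s e1 (tl a))
        (fun m r => match r with 0 => 0 | S r' => ev X s e2 (m :: r' :: tl a) end) n = S y).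
    { induction n as [|n IHn]; intros a' y' Hn H.
      - inversion H as [| | | | | |f0 g0 a0 y0 E0 H0|f0 g0 a0 n0 r y0 E0 H3 H4|]; subst; [|congruence].
        destruct (IHe1 _ _ H0) as [s1 E1]. exists s1; intros; simpl; auto.
      - inversion H as [| | | | | |f0 g0 a0 y0 E0 H0|f0 g0 a0 n0 r y0 E0 H3 H4|]; subst; [congruence|].
        rewrite E0 in Hn; injection Hn as ->.
        destruct (IHn (n :: tl a') _ eq_refl H3) as [s1 E1]. destruct (IHe2 _ _ H4) as [s2 E2].
        exists (Nat.max s1 s2); intros s Hs. simpl. simpl in E1. rewrite E1 by lia. apply E2; lia. }
    destruct (G _ _ _ eq_refl Hy) as [s0 E]. exists s0; intros s Hs; cbn [ev]; auto.
  - inversion Hy as [| | | | | | | |f0 a0 y0 H0 H1]; subst.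
    destruct (IHe _ _ H0) as [s1 E1].
    destruct (unif (fun z s => ev X s e (z :: a) >= 2) y) as [s2 E2].
    { intros z Hz. destruct (H1 z Hz) as [v [Hv Hpv]]. destruct (IHe _ _ Hpv) as [s3 E3].
      exists s3; intros s Hs; rewrite E3; auto; lia. }
    exists (Nat.max (S y) (Nat.max s1 s2)). intros s Hs. cbn [ev].
    assert (EL : lmu (fun y => (y =? s) || (ev X s e (y :: a) <=? 1)) = y).
    { apply lmu_eq. rewrite E1 by lia. apply orb_true_iff; right; reflexivity.
      intros z Hz. apply orb_false_iff; split. apply Nat.eqb_neq; lia.
      apply Nat.leb_gt. specialize (E2 s ltac:(lia) z Hz). simpl in E2; lia. }
    rewrite EL. rewrite E1 by lia. simpl.
    destruct (Nat.ltb_spec y s); [reflexivity|lia].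
Qed.

Fixpoint subst (G : prf) (e : prf) : prf :=
  match e with
  | POracle => PComp G [PProj 0]
  | PComp f gs => PComp (subst G f) (map (subst G) gs)
  | PRec f g => PRec (subst G f) (subst G g)
  | PMu f => PMu (subst G f)
  | e => e
  end.

Lemma subst_ok Y Z G : tot Y G (fun l => chi Z (nth 0 l 0)) ->
  forall e a y, peval Z e a y <-> peval Y (subst G e) a y.
Proof.
  intro HG. induction e using prf_ind'; intros a y; simpl subst.
  - rewrite (tot_zero Z a y), (tot_zero Y a y); tauto.
  - rewrite (tot_succ Z a y), (tot_succ Y a y); tauto.
  - rewrite (tot_proj Z i a y), (tot_proj Y i a y); tauto.
  - assert (H1 : tot Y (PComp G [PProj 0]) (fun a => chi Z (nth 0 a 0))).
    { tcomp. exact HG. apply tot_proj. intros; reflexivity. }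
    rewrite (H1 a y), (tot_orac Z a y). tauto.
  - assert (L : forall bs, pevall Z gs a bs <-> pevall Y (map (subst G) gs) a bs).
    { induction H; intro bs; simpl; split; intro Hl; inversion Hl as [|g0 gs0 a0 b1 bs1 Hb1 Hbs1]; subst; constructor.
      - apply H; auto. - apply IHForall; auto. - apply H; auto. - apply IHForall; auto. }
    split; intro Hp; inversion Hp as [| | | | |f0 gs0 a0 bs0 y0 Hl Hf| | |]; subst; econstructor.
    + apply L; eauto. + apply IHe; eauto. + apply L; eauto. + apply IHe; eauto.
  - assert (R : forall n a y, hd0 a = n -> (peval Z (PRec e1 e2) a y <-> peval Y (PRec (subst G e1) (subst G e2)) a y)).
    { induction n as [|n IHn]; intros a' y' Hn; split; intro H;
      inversion H as [| | | | | |f0 g0 a0 y0 E0 H0|f0 g0 a0 n0 r y0 E0 H3 H4|]; subst; try congruence.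
      - apply ev_rec0; auto. apply IHe1; auto.
      - apply ev_rec0; auto. apply IHe1; auto.
      - rewrite E0 in Hn; injection Hn as ->. eapply ev_recS; [exact E0 | apply (IHn (n :: tl a') r eq_refl); exact H3 | apply IHe2; exact H4].
      - rewrite E0 in Hn; injection Hn as ->. eapply ev_recS; [exact E0 | apply (IHn (n :: tl a') r eq_refl); exact H3 | apply IHe2; exact H4]. }
    apply (R _ a y eq_refl).
  - split; intro H; inversion H as [| | | | | | | |f0 a0 y0 H0 H1]; subst; constructor.
    + apply IHe; auto.
    + intros z Hz. destruct (H1 z Hz) as [v [Hv Hpv]]. exists v; split; auto. apply IHe; auto.
    + apply IHe; auto.
    + intros z Hz. destruct (H1 z Hz) as [v [Hv Hpv]]. exists v; split; auto. apply IHe; auto.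
Qed.

Definition kB eB := Nat.max 1 (depth eB).
Definition Tf Y eB x t := ev Y t eB [x].
Definition Tt eB := PComp (ck (kB eB) eB) (PProj 0 :: repeat PZero (kB eB - 1) ++ [PProj 1]).

Lemma tot_Tt Y eB : tot Y (Tt eB) (fun l => Tf Y eB (nth 0 l 0) (nth 1 l 0)).
Proof. unfold Tt. eapply tot_ext. eapply tot_comp. apply ck_ok. unfold kB; lia.
  apply Forall2_cons. apply tot_proj. apply Forall2_app. apply F2_rep. constructor. apply tot_proj. constructor.
  intro l. cbn [map]. rewrite map_app, map_repeat. cbn [map].
  destruct (pad_lemma [nth 0 l 0] (kB eB) 1 (nth 1 l 0)) as [E1 E2]. reflexivity. unfold kB; lia.
  cbn [app] in E1, E2. rewrite E1. unfold Tf. apply ev_agree with (kB eB). unfold kB; lia. exact E2. Qed.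

Definition inner Y eB d t := lmu (fun x => (S t <=? x) || ((d <=? x) && negb (Tf Y eB x t =? 0))).

Definition tHin := PComp tifz [PComp tle0 [PComp PSucc [PProj 2]; PProj 0]; PZero;
   PComp tifz [PComp tle0 [PProj 1; PProj 0]; PComp tifz [PProj 3; one; PZero]; one]].
Lemma tot_Hin X : tot X tHin (fun a => if S (nth 2 a 0) <=? nth 0 a 0 then 0 else
   if nth 1 a 0 <=? nth 0 a 0 then (if nth 3 a 0 =? 0 then 1 else 0) else 1).
Proof. unfold tHin. tcomp. apply tot_ifz. tcomp. apply tot_le0. tcomp. apply tot_succ. apply tot_proj.
  intros; reflexivity. apply tot_proj. intros; reflexivity. apply tot_zero.
  tcomp. apply tot_ifz. tcomp. apply tot_le0. apply tot_proj. apply tot_proj. intros; reflexivity.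
  tcomp. apply tot_ifz. apply tot_proj. apply tot_one. apply tot_zero. intros; reflexivity. apply tot_one.
  intros; reflexivity. intro a; cbn [map nth].
  destruct (S (nth 2 a 0) <=? nth 0 a 0), (nth 1 a 0 <=? nth 0 a 0); reflexivity. Qed.

Definition tInner eB := PMu (PComp tHin [PProj 0; PProj 1; PProj 2; PComp (Tt eB) [PProj 0; PProj 2]]).
Lemma tot_Inner Y eB : tot Y (tInner eB) (fun l => inner Y eB (nth 0 l 0) (nth 1 l 0)).
Proof. unfold tInner. eapply tot_ext. apply tot_mu. tcomp. apply tot_Hin. apply tot_proj. apply tot_proj. apply tot_proj.
  tcomp. apply tot_Tt. apply tot_proj. apply tot_proj. intros; reflexivity. intros; reflexivity.
  - intro l. exists (S (nth 1 l 0)). cbn [map nth]. rewrite Nat.leb_refl. reflexivity.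
  - intro l. unfold inner. cbv beta. f_equal. apply functional_extensionality; intro x. cbn [map nth].
    destruct (S (nth 1 l 0) <=? x); auto. destruct (nth 0 l 0 <=? x); auto.
    destruct (Tf Y eB x (nth 1 l 0) =? 0); auto. Qed.

Definition cF Y eB d := lmu (fun t => inner Y eB d t <=? t).
Definition tC eB := PMu (PComp tle0 [PComp (tInner eB) [PProj 1; PProj 0]; PProj 0]).

Lemma exC (B Y : nat -> Prop) eB : infinite_set B -> (forall n, B n <-> exists y, peval Y eB [n] y) ->
  forall d, exists t, inner Y eB d t <= t.
Proof. intros hB HeB d. destruct (hB d) as [x [Hx HBx]]. apply HeB in HBx as [y Hy].
  destruct (ev_compl Y _ _ _ Hy) as [s0 Hs0]. exists (Nat.max x s0).
  assert (inner Y eB d (Nat.max x s0) <= x); [|lia]. apply lmu_le.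
  apply orb_true_iff; right. apply andb_true_iff; split. apply Nat.leb_le; auto.
  unfold Tf. rewrite Hs0 by lia. reflexivity. Qed.

Lemma tot_C (B Y : nat -> Prop) eB : infinite_set B -> (forall n, B n <-> exists y, peval Y eB [n] y) ->
  tot Y (tC eB) (fun l => cF Y eB (nth 0 l 0)).
Proof. intros hB HeB. unfold tC. eapply tot_ext. apply tot_mu. tcomp. apply tot_le0. tcomp. apply tot_Inner.
  apply tot_proj. apply tot_proj. intros; reflexivity. apply tot_proj. intros; reflexivity.
  - intro l. destruct (exC B Y eB hB HeB (nth 0 l 0)) as [t Ht]. exists t. simpl.
    apply Nat.leb_le in Ht. rewrite Ht. reflexivity.
  - intro l. unfold cF. cbv beta. f_equal. apply functional_extensionality; intro t. simpl.
    destruct (inner Y eB (nth 0 l 0) t <=? t); reflexivity. Qed.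

Definition bF Y eB d := inner Y eB d (cF Y eB d).
Definition tbF eB := PComp (tInner eB) [PProj 0; tC eB].
Lemma tot_bF (B Y : nat -> Prop) eB : infinite_set B -> (forall n, B n <-> exists y, peval Y eB [n] y) ->
  tot Y (tbF eB) (fun l => bF Y eB (nth 0 l 0)).
Proof. intros hB HeB. unfold tbF. tcomp. apply tot_Inner. apply tot_proj. eapply tot_C; eauto.
  intros; reflexivity. Qed.

Lemma bF_spec (B Y : nat -> Prop) eB : infinite_set B -> (forall n, B n <-> exists y, peval Y eB [n] y) ->
  forall d, d <= bF Y eB d /\ B (bF Y eB d).
Proof. intros hB HeB d. destruct (exC B Y eB hB HeB d) as [t Ht].
  destruct (lmu_spec (fun t => inner Y eB d t <=? t) t) as [P1 _]. apply Nat.leb_le; auto.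
  fold (cF Y eB d) in P1. apply Nat.leb_le in P1. unfold bF.
  set (c := cF Y eB d) in *.
  destruct (lmu_spec (fun x => (S c <=? x) || ((d <=? x) && negb (Tf Y eB x c =? 0))) (S c)) as [Q1 _].
  rewrite Nat.leb_refl; reflexivity.
  fold (inner Y eB d c) in Q1. set (v := inner Y eB d c) in *.
  apply orb_true_iff in Q1 as [Q1|Q1]. apply Nat.leb_le in Q1; lia.
  apply andb_true_iff in Q1 as [Q1 Q2]. apply Nat.leb_le in Q1. split; auto.
  apply HeB. unfold Tf in Q2. destruct (ev Y c eB [v]) as [|y] eqn:Ev; [discriminate|].
  exists y. eapply ev_sound; eauto. Qed.

Definition D Y eB n := nat_rec (fun _ => nat) 0 (fun _ r => S (bF Y eB r)) n.
Definition tD eB := PRec PZero (PComp PSucc [PComp (tbF eB) [PProj 1]]).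
Lemma tot_D (B Y : nat -> Prop) eB : infinite_set B -> (forall n, B n <-> exists y, peval Y eB [n] y) ->
  tot Y (tD eB) (fun l => D Y eB (nth 0 l 0)).
Proof. intros hB HeB. unfold tD. eapply tot_ext. apply tot_rec. apply tot_zero. tcomp. apply tot_succ.
  tcomp. eapply tot_bF; eauto. apply tot_proj. intros; reflexivity. intros; reflexivity.
  intro l. cbv beta. rewrite hd0_nth. reflexivity. Qed.

Lemma D_ge (B Y : nat -> Prop) eB : infinite_set B -> (forall n, B n <-> exists y, peval Y eB [n] y) ->
  forall n, n <= D Y eB n.
Proof. intros hB HeB n. induction n; simpl. lia. fold (D Y eB n).
  destruct (bF_spec B Y eB hB HeB (D Y eB n)). lia. Qed.

Definition Zs Y eB x := exists n, bF Y eB (D Y eB n) = x.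

Definition tM eB := PMu (PComp tifz [PComp tle0 [PProj 0; PProj 1]; PComp teq0 [PComp (tbF eB) [PComp (tD eB) [PProj 0]]; PProj 1]; PZero]).
Definition tZ eB := PComp tifz [PComp tle0 [tM eB; PProj 0]; one; PZero].

Lemma tot_Z (B Y : nat -> Prop) eB : infinite_set B -> (forall n, B n <-> exists y, peval Y eB [n] y) ->
  tot Y (tZ eB) (fun l => chi (Zs Y eB) (nth 0 l 0)).
Proof. intros hB HeB.
  assert (HM : tot Y (tM eB) (fun l => lmu (fun n => (nth 0 l 0 <? n) || (bF Y eB (D Y eB n) =? nth 0 l 0)))).
  { unfold tM. eapply tot_ext. apply tot_mu. tcomp. apply tot_ifz. tcomp. apply tot_le0. apply tot_proj. apply tot_proj.
    intros; reflexivity. tcomp. apply tot_eq0. tcomp. eapply tot_bF; eauto. tcomp. eapply tot_D; eauto.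
    apply tot_proj. intros; reflexivity. intros; reflexivity. apply tot_proj. intros; reflexivity.
    apply tot_zero. intros; reflexivity.
    - intro l. exists (S (nth 0 l 0)). cbn [map nth]. destruct (Nat.leb_spec (S (nth 0 l 0)) (nth 0 l 0)). lia.
      reflexivity.
    - intro l. cbv beta. f_equal. apply functional_extensionality; intro n. cbn [map nth].
      destruct (Nat.leb_spec n (nth 0 l 0)); destruct (Nat.ltb_spec (nth 0 l 0) n); try lia; cbn [Nat.eqb orb]; auto.
      destruct (bF Y eB (D Y eB n) =? nth 0 l 0); reflexivity. }
  unfold tZ. tcomp. apply tot_ifz. tcomp. apply tot_le0. exact HM. apply tot_proj. intros; reflexivity.
  apply tot_one. apply tot_zero.
  intro l. simpl. set (x := nth 0 l 0). set (p := fun n => (x <? n) || (bF Y eB (D Y eB n) =? x)).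
  destruct (lmu_spec p (S x)) as [P1 _]. unfold p. rewrite (proj2 (Nat.ltb_lt x (S x))); auto.
  unfold chi. destruct (excluded_middle_informative (Zs Y eB x)) as [[n Hn]|Hn].
  - assert (lmu p <= n). { apply lmu_le. unfold p. rewrite Hn, Nat.eqb_refl, orb_true_r. reflexivity. }
    assert (n <= x). { rewrite <- Hn. pose proof (D_ge B Y eB hB HeB n). pose proof (bF_spec B Y eB hB HeB (D Y eB n)). lia. }
    destruct (Nat.leb_spec (lmu p) x); [reflexivity|lia].
  - destruct (Nat.leb_spec (lmu p) x); [|reflexivity]. exfalso. apply Hn. exists (lmu p).
    change ((x <? lmu p) || (bF Y eB (D Y eB (lmu p)) =? x) = true) in P1. apply orb_true_iff in P1 as [P1|P1]. apply Nat.ltb_lt in P1; lia. apply Nat.eqb_eq; auto.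
Qed.

Theorem theorem3p1 (A B C : nat -> Prop) :
  infinite_set B -> infinite_set C ->
  (forall Y, subset_of Y B -> infinite_set Y -> ce_in Y A) ->
  (forall Y, subset_of Y C -> infinite_set Y -> ce_in Y B) ->
  forall Y, subset_of Y C -> infinite_set Y -> ce_in Y A.
Proof.
  intros hB hC H3 H4 Y HY HYi. destruct (H4 Y HY HYi) as [eB HeB].
  assert (HZB : subset_of (Zs Y eB) B).
  { intros x [n <-]. apply (bF_spec B Y eB hB HeB). }
  assert (HZi : infinite_set (Zs Y eB)).
  { intro m. exists (bF Y eB (D Y eB m)). split. pose proof (D_ge B Y eB hB HeB m).
    pose proof (bF_spec B Y eB hB HeB (D Y eB m)). lia. exists m; reflexivity. }
  destruct (H3 _ HZB HZi) as [eA HeA].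
  exists (subst (tZ eB) eA). intro n. rewrite HeA.
  pose proof (subst_ok Y (Zs Y eB) (tZ eB) (tot_Z B Y eB hB HeB)) as HS.
  split; intros [y Hy]; exists y; apply HS; auto.
Qed.
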